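(* Let $n=p+q\ge 2$ and let $h^1,\dots,h^n:\mathbb{R}^{p,q}\to\mathcal{C}\ell(p,q)$ be a Clifford field vector. Then for every $x\in\mathbb{R}^{p,q}$ and every $\mu=1,\dots,n$, $h^\mu(x)\in\mathcal{C}\ell_{\circledS}(p,q)$, i.e. $\pi_0(h^\mu(x))=0$, and, if $n$ is odd, also $\pi_n(h^\mu(x))=0$.
   Context: $\eta=\mathrm{diag}(1,\dots,1,-1,\dots,-1)$ ($p$ ones, $q$ minus ones). $\mathcal{C}\ell(p,q)$ is the complex Clifford algebra with identity $e$ and generators $e^1,\dots,e^n$, $e^ae^b+e^be^a=2\eta^{ab}e$, with basis $e$ and $e^{a_1\dots a_k}=e^{a_1}\cdots e^{a_k}$ ($a_1<\dots<a_k$). $\pi_k$ denotes the projection onto the span $\mathcal{C}\ell_k(p,q)$ of the basis elements with $k$ indices. $\mathrm{Tr}(U)$ is the coefficient of $e$ in $U$. The center of $\mathcal{C}\ell(p,q)$ is $\mathcal{C}\ell_0(p,q)$ for even $n$ and $\mathcal{C}\ell_0(p,q)\oplus\mathcal{C}\ell_n(p,q)$ for odd $n$; $\mathcal{C}\ell_{\circledS}(p,q)$ denotes the set of elements with zero projection onto the center. A Clifford field vector is a collection of functions $h^\mu:\mathbb{R}^{p,q}\to\mathcal{C}\ell(p,q)$, $\mu=1,\dots,n$, such that for every $x$: $h^\mu h^\nu+h^\nu h^\mu=2\eta^{\mu\nu}e$ for all $\mu,\nu$, and $\mathrm{Tr}(h^1\cdots h^n)=0$. *)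

(* Defs.v *)
From mathcomp Require Import all_boot all_algebra.
From mathcomp Require Import reals complex.
Set Implicit Arguments. Unset Strict Implicit. Unset Printing Implicit Defensive.
Import GRing.Theory Num.Theory.
Local Open Scope ring_scope.

Section Clifford.
Variables (R : realType) (p q : nat).
Local Notation n := (p + q)%N.

(* Elements of Cl(p,q): complex coefficients on the basis e^A, A ⊆ {0,..,n-1}
   (index a = 0..n-1 corresponds to the paper's generator e^{a+1});
   the basis element e^A is e^{a_1}...e^{a_k} with a_1 < ... < a_k, e^∅ = e. *)
Definition Cl := {ffun {set 'I_n} -> R[i]}.

Definition eta_diag (a : 'I_n) : R[i] := if (a < p)%N then 1 else -1.
Definition eta (a b : 'I_n) : R[i] := if a == b then eta_diag a else 0.

Definition symdiff (A B : {set 'I_n}) : {set 'I_n} := (A :\: B) :|: (B :\: A).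

(* e^A e^B = cl_sign A B e^{A Δ B} *)
Definition cl_sign (A B : {set 'I_n}) : R[i] :=
  (-1) ^+ #|[set ab : 'I_n * 'I_n | [&& ab.1 \in A, ab.2 \in B & (ab.2 < ab.1)%N]]|
  * \prod_(a in A :&: B) eta_diag a.

Definition clbasis (A : {set 'I_n}) : Cl := [ffun B => (B == A)%:R].
Definition clone : Cl := clbasis set0.
Definition clgen (a : 'I_n) : Cl := clbasis [set a].

Definition clmul (U V : Cl) : Cl :=
  [ffun C => \sum_(A : {set 'I_n}) \sum_(B : {set 'I_n})
     (if symdiff A B == C then cl_sign A B * U A * V B else 0)].

Definition clproj (k : nat) (U : Cl) : Cl :=
  [ffun A : {set 'I_n} => if #|A| == k then U A else 0].

Definition clTr (U : Cl) : R[i] := U set0.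

(* Clifford field vector: h^mu : R^{p,q} -> Cl(p,q), mu = 1..n (here 0..n-1) *)
Definition clifford_field_vector (h : 'I_n -> 'rV[R]_n -> Cl) : Prop :=
  forall x : 'rV[R]_n,
    (forall mu nu : 'I_n,
        clmul (h mu x) (h nu x) + clmul (h nu x) (h mu x) = (2 * eta mu nu) *: clone)
    /\ clTr (\big[clmul/clone]_(mu < n) h mu x) = 0.

End Clifford.

(* Main.v *)
Require Import Defs.
From mathcomp Require Import all_boot all_algebra.
From mathcomp Require Import reals complex.
From mathcomp Require Import ring.
Set Implicit Arguments. Unset Strict Implicit. Unset Printing Implicit Defensive.
Import GRing.Theory Num.Theory.
Local Open Scope ring_scope.

Section Aux.
Variables (R : realType) (p q : nat).
Local Notation n := (p + q)%N.
Local Notation S := {set 'I_n}.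
Local Notation Cl := (Cl R p q).
Local Notation sgn := (cl_sign R).

Lemma in_sd (A B : S) x : (x \in symdiff A B) = (x \in A) (+) (x \in B).
Proof. by rewrite !inE; case: (x \in A); case: (x \in B). Qed.

Lemma sdK (A B : S) : symdiff A (symdiff A B) = B.
Proof. by apply/setP=> x; rewrite !in_sd addKb. Qed.

Lemma sdC (A B : S) : symdiff A B = symdiff B A.
Proof. by apply/setP=> x; rewrite !in_sd addbC. Qed.

Lemma sdA (A B C : S) : symdiff A (symdiff B C) = symdiff (symdiff A B) C.
Proof. by apply/setP=> x; rewrite !in_sd addbA. Qed.

Lemma sd0 (A : S) : symdiff A set0 = A.
Proof. by apply/setP=> x; rewrite !in_sd inE addbF. Qed.

Lemma sdvv (A : S) : symdiff A A = set0.
Proof. by apply/setP=> x; rewrite !in_sd inE addbb. Qed.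

Lemma sd_eq (A B C : S) : (symdiff A B == C) = (B == symdiff A C).
Proof.
apply/eqP/eqP => [<-|->]; first by rewrite sdK.
by rewrite sdK.
Qed.

Lemma clmulE (U V : Cl) C :
  clmul U V C = \sum_(A : S) sgn A (symdiff A C) * U A * V (symdiff A C).
Proof.
rewrite ffunE; apply: eq_bigr => A _.
rewrite (bigD1 (symdiff A C)) //= sdK eqxx big1 ?addr0 // => B /negbTE nB.
by rewrite sd_eq nB.
Qed.

Definition sg (b : bool) : R[i] := if b then -1 else 1.

Lemma sgX (b1 b2 : bool) : sg (b1 (+) b2) = sg b1 * sg b2.
Proof. by case: b1; case: b2; rewrite /sg /= ?mulN1r ?opprK ?mul1r ?mulr1. Qed.

Lemma sg2 b : sg b * sg b = 1.
Proof. by case: b; rewrite /sg ?mulN1r ?opprK ?mul1r. Qed.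

Lemma card_sg (T : finType) (P : pred T) :
  (-1) ^+ #|[set x | P x]| = \prod_x sg (P x) :> R[i].
Proof.
rewrite -prodr_const big_mkcond /=; apply: eq_bigr => x _.
by rewrite inE /sg; case: (P x).
Qed.

Definition ed (b : bool) (a : 'I_n) : R[i] := if b then eta_diag R a else 1.

Lemma eta2 (a : 'I_n) : eta_diag R a * eta_diag R a = 1.
Proof. by rewrite /eta_diag; case: ifP; rewrite ?mulr1 ?mulN1r ?opprK. Qed.

Lemma sgnE (A B : S) :
  sgn A B = (\prod_(ab : 'I_n * 'I_n) sg [&& ab.1 \in A, ab.2 \in B & (ab.2 < ab.1)%N])
            * \prod_a ed ((a \in A) && (a \in B)) a.
Proof.
rewrite /cl_sign card_sg; congr (_ * _).
rewrite big_mkcond /=; apply: eq_bigr => a _; by rewrite inE.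
Qed.

Lemma sgn_cocycle (A B C : S) :
  sgn A B * sgn (symdiff A B) C = sgn A (symdiff B C) * sgn B C.
Proof.
rewrite !sgnE mulrACA [RHS]mulrACA -!big_split /=; congr (_ * _).
  apply: eq_bigr => [[i j]] _ /=; rewrite !in_sd.
  case: (j < i)%N; rewrite ?andbF /sg ?mulr1 //.
  by case: (i \in A); case: (i \in B); case: (j \in B); case: (j \in C);
    rewrite /= ?mulr1 ?mul1r ?mulN1r ?opprK.
apply: eq_bigr => a _ /=; rewrite !in_sd /ed.
by case: (a \in A); case: (a \in B); case: (a \in C);
  rewrite /= ?mulr1 ?mul1r ?eta2.
Qed.

Lemma sum_mid (a b : R[i]) (F : S -> R[i]) :
  a * (\sum_A F A) * b = \sum_A a * F A * b.
Proof. by rewrite big_distrr big_distrl. Qed.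

Lemma clmulA (U V W : Cl) : clmul (clmul U V) W = clmul U (clmul V W).
Proof.
apply/ffunP => D; rewrite !clmulE.
under eq_bigr do rewrite clmulE sum_mid.
under [RHS]eq_bigr do rewrite clmulE mulr_sumr.
rewrite exchange_big /=; apply: eq_bigr => A _.
rewrite (reindex_inj (can_inj (sdK A))) /=.
apply: eq_bigr => B _; rewrite sdK.
have -> : symdiff (symdiff A B) D = symdiff B (symdiff A D).
  by apply/setP=> x; rewrite !in_sd; case: (x \in A); case: (x \in B); case: (x \in D).
set E := symdiff B (symdiff A D).
have HE : symdiff A D = symdiff B E by rewrite /E sdK.
rewrite HE.
have HC := sgn_cocycle A B E.
transitivity (U A * V B * W E * (sgn A B * sgn (symdiff A B) E)); first by ring.
rewrite HC; ring.
Qed.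

Lemma sgn0l (B : S) : sgn set0 B = 1.
Proof.
rewrite sgnE big1 ?mul1r => [|ab _]; last by rewrite inE.
by rewrite big1 // => a _; rewrite inE.
Qed.

Lemma sgn0r (A : S) : sgn A set0 = 1.
Proof.
rewrite sgnE big1 ?mul1r => [|ab _]; last by rewrite inE andbF.
by rewrite big1 // => a _; rewrite inE andbF.
Qed.

Lemma basisE (A B : S) : clbasis R A B = (B == A)%:R.
Proof. by rewrite ffunE. Qed.

Lemma clmul1l (U : Cl) : clmul (clone R p q) U = U.
Proof.
apply/ffunP => C; rewrite clmulE (bigD1 set0) //= big1 ?addr0.
  by rewrite basisE eqxx sgn0l mulr1 mul1r sdC sd0.
by move=> A nA; rewrite basisE (negbTE nA) mulr0 mul0r.
Qed.

Lemma clmul1r (U : Cl) : clmul U (clone R p q) = U.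
Proof.
apply/ffunP => C; rewrite clmulE (bigD1 C) //= big1 ?addr0.
  by rewrite sdvv basisE eqxx sgn0r mulr1 mul1r.
move=> A nA; rewrite basisE.
have -> : (symdiff A C == set0) = false.
  apply/negbTE; apply: contra nA => /eqP h.
  by rewrite -(sdK A C) h sd0.
by rewrite mulr0.
Qed.

Lemma clmulNl (U V : Cl) : clmul (- U) V = - clmul U V.
Proof.
apply/ffunP => C; rewrite clmulE [RHS]ffunE clmulE -sumrN; apply: eq_bigr => A _.
by rewrite ffunE mulrN mulNr.
Qed.

Lemma clmulZl c (U V : Cl) : clmul (c *: U) V = c *: clmul U V.
Proof.
apply/ffunP => C; rewrite clmulE [RHS]ffunE clmulE scaler_sumr; apply: eq_bigr => A _.
rewrite ffunE /GRing.scale /=; ring.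
Qed.

Lemma clmulZr c (U V : Cl) : clmul U (c *: V) = c *: clmul U V.
Proof.
apply/ffunP => C; rewrite clmulE [RHS]ffunE clmulE scaler_sumr; apply: eq_bigr => A _.
rewrite ffunE /GRing.scale /=; ring.
Qed.

Lemma clTrE (U V : Cl) : clTr (clmul U V) = \sum_A sgn A A * U A * V A.
Proof. by rewrite /clTr clmulE; apply: eq_bigr => A _; rewrite sd0. Qed.

Lemma clTrC (U V : Cl) : clTr (clmul U V) = clTr (clmul V U).
Proof. by rewrite !clTrE; apply: eq_bigr => A _; ring. Qed.

Lemma clTrN (U : Cl) : clTr (- U) = - clTr U.
Proof. by rewrite /clTr ffunE. Qed.

Lemma clTrZ c (U : Cl) : clTr (c *: U) = c * clTr U.
Proof. by rewrite /clTr ffunE. Qed.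

Lemma clTr_top (U : Cl) :
  clTr (clmul U (clbasis R setT)) = sgn [set: 'I_n] [set: 'I_n] * U setT.
Proof.
rewrite clTrE (bigD1 setT) //= big1 ?addr0.
  by rewrite basisE eqxx mulr1.
by move=> A nA; rewrite basisE (negbTE nA) mulr0.
Qed.

Lemma sgn_neq0 (A B : S) : sgn A B != 0.
Proof.
rewrite /cl_sign mulf_eq0 negb_or expf_eq0 oppr_eq0 oner_eq0 andbF /=.
rewrite prodf_seq_neq0; apply/allP => a _; apply/implyP => _.
by rewrite /eta_diag; case: ifP; rewrite ?oppr_eq0 oner_eq0.
Qed.

Lemma prod_sg2 (F : 'I_n * 'I_n -> bool) :
  (\prod_ab sg (F ab)) * (\prod_ab sg (F ab)) = 1.
Proof. by rewrite -big_split /= big1 // => ab _; rewrite sg2. Qed.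

Lemma sgn_topC (B : S) : odd n -> sgn setT B = sgn B setT.
Proof.
move=> hodd; rewrite !sgnE; congr (_ * _); last first.
  by apply: eq_bigr => a _; rewrite !inE andbC.
set P := \prod_ab _.
rewrite (reindex_inj (h := fun ab : 'I_n * 'I_n => (ab.2, ab.1))); last first.
  by move=> [? ?] [? ?] [-> ->].
set Q := \prod_ab _.
have -> : P = \prod_(ab : 'I_n * 'I_n) sg ((ab.2 \in B) && (ab.2 < ab.1)%N).
  by apply: eq_bigr => ab _; rewrite inE.
have -> : Q = \prod_(ab : 'I_n * 'I_n) sg ((ab.2 \in B) && (ab.1 < ab.2)%N).
  by apply: eq_bigr => ab _; rewrite /= !inE.
set P' := \prod_ab _. set Q' := \prod_ab _.
have HPQ : P' * Q' = 1.
  rewrite -big_split /=.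
  rewrite (eq_bigr (fun ab : 'I_n * 'I_n => sg ((ab.2 \in B) && (val ab.1 != val ab.2)))); last first.
    move=> [i j] _ /=; case: (j \in B) => /=; last by rewrite /sg mulr1.
    by case: (ltngtP i j) => _; rewrite /sg ?mulr1 ?mul1r.
  rewrite -(pair_big xpredT xpredT (fun i j => sg ((j \in B) && (val i != val j)))) /=.
  rewrite exchange_big /= big1 // => j _.
  case: (j \in B) => /=; last by rewrite big1 // => i _; rewrite /sg.
  rewrite -card_sg.
  have -> : [set x | val x != val j] = [set~ j].
    by apply/setP => x; rewrite !inE val_eqE.
  rewrite cardsC1 card_ord -signr_odd.
  move: hodd; case: (p + q)%N => //= m H. by rewrite (negbTE H).
rewrite -[LHS]mulr1 -(prod_sg2 (fun ab : 'I_n * 'I_n => (ab.2 \in B) && (ab.1 < ab.2)%N)).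
by rewrite mulrA HPQ mul1r.
Qed.

Lemma top_central (U : Cl) : odd n ->
  clmul (clbasis R setT) U = clmul U (clbasis R setT).
Proof.
move=> hodd; apply/ffunP => C; rewrite !clmulE.
rewrite (bigD1 setT) //= big1 ?addr0; last first.
  by move=> A nA; rewrite basisE (negbTE nA) mulr0 mul0r.
rewrite (bigD1 (symdiff setT C)) //= big1 ?addr0; last first.
  move=> A nA; rewrite basisE.
  have -> : (symdiff A C == setT) = false.
    apply/negbTE; apply: contra nA => /eqP h.
    by rewrite -h -sdA sdvv sd0.
  by rewrite mulr0.
have -> : symdiff (symdiff setT C) C = setT by rewrite -sdA sdvv sd0.
rewrite !basisE eqxx mulr1 sgn_topC //. by rewrite (_ : true%:R = 1) ?mulr1.
Qed.
End Aux.

Lemma eqN_0 (R : realType) (x : R[i]) : x = - x -> x = 0.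
Proof.
move=> E; have : x *+ 2 = 0 by rewrite mulr2n {1}E addNr.
by move/eqP; rewrite mulrn_eq0 /= => /eqP.
Qed.

Theorem theorem5 (R : realType) (p q : nat) (h : 'I_(p + q) -> 'rV[R]_(p + q) -> Cl R p q) :
  (2 <= p + q)%N ->
  clifford_field_vector h ->
  forall (x : 'rV[R]_(p + q)) (mu : 'I_(p + q)),
    clproj 0 (h mu x) = 0 /\ (odd (p + q) -> clproj (p + q) (h mu x) = 0).
Proof.
move=> hn hcf x mu; have [hrel _] := hcf x.
have [nu hnu] : exists nu : 'I_(p + q), nu != mu.
  have lt : ((if val mu == 0%N then 1 else 0) < p + q)%N.
    by case: (_ == _); [exact: hn | exact: leq_trans _ hn].
  exists (Ordinal lt); apply/negP => /eqP /(congr1 val) /=.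
  by case: ifP => [/eqP -> | /eqP h0 h1] //; apply: h0.
set a := h mu x; set b := h nu x.
have Hba : clmul b a = - clmul a b.
  apply/eqP; rewrite -addr_eq0 hrel /eta eq_sym (negbTE hnu) mulr0 scale0r //.
set eta := eta_diag R nu.
have etanz : eta != 0 by rewrite /eta /eta_diag; case: ifP; rewrite ?oppr_eq0 oner_eq0.
have two : (2%:R : R[i]) != 0 by rewrite pnatr_eq0.
have Hbb : clmul b b = eta *: clone R p q.
  have := hrel nu nu; rewrite /Defs.eta eqxx -/eta -scalerA -mulr2n -scaler_nat.
  exact: scalerI.
have T0 : clTr (clmul (clmul a b) b) = 0.
  apply: eqN_0.
  rewrite {1}clTrC -clmulA Hba clmulNl clTrN //.
have Ha : clmul a (clmul b b) = eta *: a by rewrite Hbb clmulZr clmul1r.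
split.
  have Tra : clTr a = 0.
    move: T0; rewrite clmulA Ha clTrZ => /eqP; rewrite mulf_eq0 (negbTE etanz) /=.
    by move/eqP.
  apply/ffunP => A; rewrite !ffunE; case: ifP => // hA.
  by move: hA; rewrite cards_eq0 => /eqP ->.
move=> hodd.
set w := clbasis R [set: 'I_(p + q)].
have TX : clTr (clmul (clmul (clmul a b) b) w) = 0.
  apply: eqN_0.
  rewrite {1}clmulA -top_central // -clmulA clTrC -!clmulA Hba clmulNl clmulNl clTrN //.
have Taw : clTr (clmul a w) = 0.
  move: TX; rewrite [clmul (clmul a b) b]clmulA Ha clmulZl clTrZ => /eqP; rewrite mulf_eq0 (negbTE etanz) /=.
  by move/eqP.
have aT : a setT = 0.
  move: Taw; rewrite clTr_top => /eqP; rewrite mulf_eq0 (negbTE (sgn_neq0 _ _ _)) /=.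
  by move/eqP.
apply/ffunP => A; rewrite !ffunE; case: ifP => // /eqP hA.
have -> : A = setT.
  by apply/eqP; rewrite eqEcard subsetT cardsT card_ord hA leqnn.
exact: aT.
Qed.
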